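(* Let $N\ge 2$ and $b_1,\dots,b_N\in\{0,1\}$ with $b_N=1$ and $\sum_{j=1}^N b_j 2^{N-j}>1$. Let $s_b$ be the largest real root of $P_b(x)=x^N-\sum_{j=1}^N b_jx^{N-j}$. Then $s_b$ is an algebraic integer of degree greater than $1$. *)

(* Defs.v *)
From HB Require Import structures.
From mathcomp Require Import all_boot all_order all_algebra.
From mathcomp Require Import all_classical all_reals.
Set Implicit Arguments. Unset Strict Implicit. Unset Printing Implicit Defensive.
Import Order.TTheory GRing.Theory Num.Theory.
Local Open Scope ring_scope.

(* b : nat -> bool, only b 1, ..., b N matter (b_j = 1 iff b j = true). *)
Definition Pb (R : nzRingType) (N : nat) (b : nat -> bool) : {poly R} :=
  'X^N - \sum_(1 <= j < N.+1) (b j)%:R *: 'X^(N - j).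

Definition algebraic_integer (R : nzRingType) (x : R) : Prop :=
  integralOver (intr : int -> R) x.

(* The degree of x (degree of its minimal polynomial over Q) is > 1:
   no nonzero rational polynomial of degree <= 1 vanishes at x. *)
Definition alg_degree_gt1 (R : fieldType) (x : R) : Prop :=
  forall q : {poly rat}, q != 0 -> root (map_poly (ratr : rat -> R) q) x -> (2 < size q)%N.

(* Main.v *)
Require Import Defs.
From HB Require Import structures.
From mathcomp Require Import all_boot all_order all_algebra.
From mathcomp Require Import all_classical all_reals.
From mathcomp Require Import all_field zify ring lra.
Import Order.TTheory GRing.Theory Num.Theory.
Local Open Scope ring_scope.

Lemma map_Pb (A B : nzRingType) (f : {rmorphism A -> B}) N b :
  map_poly f (Pb A N b) = Pb B N b.
Proof.
rewrite /Pb rmorphB /= map_polyXn rmorph_sum /=; congr (_ - _).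
by apply: eq_bigr => j _; rewrite map_polyZ map_polyXn rmorph_nat.
Qed.

Lemma Pb_monic (A : nzRingType) N b : (1 <= N)%N -> Pb A N b \is monic.
Proof.
move=> N1; apply/monicP; rewrite /Pb lead_coefDl ?lead_coefXn //.
rewrite size_polyN size_polyXn ltnS big_nat_cond.
apply: (big_ind (fun p : {poly A} => size p <= N)%N).
- by rewrite size_poly0.
- move=> p q hp hq; apply: leq_trans (size_polyD _ _) _; by rewrite geq_max hp hq.
- move=> j /andP[/andP[j1 jN] _]; apply: leq_trans (size_scale_leq _ _) _.
  rewrite size_polyXn; lia.
Qed.

Lemma Pb_horner (A : comNzRingType) N b (x : A) :
  (Pb A N b).[x] = x ^+ N - \sum_(1 <= j < N.+1) (b j)%:R * x ^+ (N - j).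
Proof.
rewrite /Pb hornerD hornerN horner_sum hornerXn; congr (_ - _).
by apply: eq_bigr => j _; rewrite hornerZ hornerXn.
Qed.

Lemma geom_lt (R : realDomainType) (x : R) n : 2 <= x ->
  \sum_(k < n) x ^+ k <= x ^+ n - 1.
Proof.
move=> x2; elim: n => [|n IH]; first by rewrite big_ord0 expr0 subrr.
rewrite big_ord_recr /= exprS.
have h : x ^+ n >= 1 by apply: exprn_ege1; apply: le_trans x2; rewrite ler1n.
have : 2 * x ^+ n <= x * x ^+ n by rewrite ler_wpM2r // (le_trans _ h).
lra.
Qed.

Lemma Pb_pos (R : realDomainType) N b (x : R) : 2 <= x -> 0 < (Pb R N b).[x].
Proof.
move=> x2; rewrite Pb_horner subr_gt0.
have x0 : 0 <= x by apply: le_trans x2.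
apply: (le_lt_trans (y := \sum_(1 <= j < N.+1) x ^+ (N - j))).
  apply: ler_sum => j _; case: (b j) => /=; first by rewrite mul1r.
  by rewrite mul0r exprn_ge0.
have -> : \sum_(1 <= j < N.+1) x ^+ (N - j) = \sum_(k < N) x ^+ k.
  rewrite big_add1 /= big_mkord (reindex_inj rev_ord_inj) /=.
  by apply: eq_bigr => k _; congr (_ ^+ _); rewrite subnS subKn.
have := @geom_lt _ x N x2; lra.
Qed.

Theorem mainTheorem5 (R : realType) (N : nat) (b : nat -> bool) (s : R) :
  (2 <= N)%N ->
  b N = true ->
  (1 < \sum_(1 <= j < N.+1) b j * 2 ^ (N - j))%N ->
  root (Pb R N b) s ->
  (forall r : R, root (Pb R N b) r -> r <= s) ->
  algebraic_integer s /\ alg_degree_gt1 s.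
Proof.
move=> N2 bN hsum hroot hmax.
have N1 : (1 <= N)%N by apply: leq_trans N2.
split.
  exists (Pb int N b); first exact: Pb_monic.
  by rewrite (@map_Pb _ _ intr N b).
have hb : (0 < \sum_(1 <= j < N) (b j : nat))%N.
  move: hsum; rewrite big_nat_recr //= bN subnn expn0 mul1n.
  move=> h0; have h : (0 < \sum_(1 <= j < N) b j * 2 ^ (N - j))%N by lia.
  rewrite -(ltn_pmul2l (expn_gt0 2 N)) muln0 big_distrr /=.
  apply: leq_trans h _; apply: leq_sum => j _.
  by case: (b j); rewrite ?mul0n ?muln0 // mul1n muln1 leq_pexp2l // leq_subr.
have hS : 2 <= \sum_(1 <= j < N.+1) (b j)%:R :> R.
  rewrite -natr_sum big_nat_recr //= bN ler_nat; lia.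
have P1 : (Pb R N b).[1] < 0.
  rewrite Pb_horner expr1n.
  under eq_bigr do rewrite expr1n mulr1.
  lra.
have P2 : 0 < (Pb R N b).[2] by apply: Pb_pos.
have [x /andP[x1 x2] rx] : exists2 x : R, 1 <= x <= 2 & root (Pb R N b) x.
  apply: poly_ivt; [lra | by rewrite (ltW P1) (ltW P2)].
have xn1 : x != 1.
  by apply/eqP => ex; move: rx; rewrite ex /root (lt_eqF P1).
have s1 : 1 < s.
  by apply: lt_le_trans (hmax x rx); rewrite lt_neqAle eq_sym xn1 x1.
have s2 : s < 2.
  rewrite ltNge; apply/negP => hs2; move: hroot.
  by rewrite /root (gt_eqF (@Pb_pos _ N b _ hs2)).
move=> q qn0 hq; rewrite ltnNge; apply/negP => hsz.
have szq : size (map_poly (ratr : rat -> R) q) = size q by rewrite size_map_poly.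
have [hle1|hgt1] := leqP (size q) 1.
  move: hq qn0; rewrite (size1_polyC hle1) map_polyC rootC fmorph_eq0 => /eqP ->.
  by rewrite eqxx.
have sz2 : size q = 2%N by lia.
have q1n0 : q`_1 != 0.
  by move: qn0; rewrite -lead_coef_eq0 lead_coefE sz2.
move: hq; rewrite /root horner_coef szq sz2 !big_ord_recr big_ord0 /= add0r.
rewrite !coef_map /= expr0 expr1 mulr1 => /eqP hq.
have q1R : ratr q`_1 != 0 :> R by rewrite fmorph_eq0.
pose r := - q`_0 / q`_1.
have sr : s = ratr r.
  rewrite /r fmorph_div rmorphN /=.
  move/eqP: hq; rewrite addr_eq0 => /eqP ->.
  rewrite opprK mulrC mulKf //.
have hrr : root (Pb rat N b) r.
  by move: hroot; rewrite sr -(@map_Pb _ _ (ratr : {rmorphism rat -> R}) N b) fmorph_root.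
have hrC : root (Pb algC N b) (ratr r).
  by rewrite -(@map_Pb _ _ (ratr : {rmorphism rat -> algC}) N b) fmorph_root.
have hA : (ratr r : algC) \in Aint.
  apply: (root_monic_Aint hrC (@Pb_monic algC N b N1)).
  rewrite -(@map_Pb _ _ intr N b); apply/polyOverP => i.
  by rewrite coef_map rpred_int.
have /intrP [m hm] := Cint_rat_Aint (Crat_rat r) hA.
have rm : r = m%:~R.
  by apply: (fmorph_inj (ratr : {rmorphism rat -> algC})); rewrite rmorph_int; exact: hm.
move: s1 s2; rewrite sr rm rmorph_int => h1 h2.
have i1 : (1 < m)%R by rewrite -(ltr1z R).
have i2 : (m < 2)%R.
  by rewrite -(ltr_int R) (_ : 2%:~R = 2 :> R).
by case: m {hm rm h1 h2} i1 i2 => [[|[|n]]|n].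
Qed.
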